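(* Let $r\ge 2$, $0\le s<r/2$, $n=\frac{r(r+1)}2+s$, and fix a line $L\subset\mathbb{P}^2$. If $\Gamma\in\mathbb{P}^{2[n]}$ is general, then there exists $\Gamma''\in L^{[r-1]}$ such that $\Gamma\cup\Gamma''$ lies on a pencil of plane curves of degree $r$, i.e. $h^0(\mathcal{I}_{\Gamma\cup\Gamma''}(r))\ge 2$.
   Context: Over $\mathbb{C}$. $\mathbb{P}^{2[n]}$ is the Hilbert scheme of length-$n$ zero-dimensional subschemes of $\mathbb{P}^2$ and $L^{[r-1]}$ the Hilbert scheme of length-$(r-1)$ subschemes of $L$. *)

(* Defs.v *)
From mathcomp Require Import all_boot all_algebra.
From mathcomp Require Import complex.
From mathcomp Require Import Rstruct.
From mathcomp Require Import mpoly.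
Import GRing.Theory.
Set Implicit Arguments.
Unset Strict Implicit.
Unset Printing Implicit Defensive.
Local Open Scope ring_scope.

Definition C : closedFieldType := complex Rdefinitions.R.

(* Homogeneous coordinates of the i-th point of a configuration of n points
   of P^2, encoded as a flat vector of 3*n complex numbers
   (point i has coordinates v(3i), v(3i+1), v(3i+2)). *)
Lemma pt_idx_lt (n : nat) (i : 'I_n) (j : 'I_3) : (3 * i + j < 3 * n)%N.
Proof.
have hi := ltn_ord i; have hj := ltn_ord j.
apply: (@leq_trans (3 * i + 3)); first by rewrite ltn_add2l.
by rewrite -mulnSr leq_mul2l.
Qed.

Definition pt (n : nat) (v : 'I_(3 * n) -> C) (i : 'I_n) (j : 'I_3) : C :=
  v (Ordinal (@pt_idx_lt n i j)).

Definition nonzero3 (p : 'I_3 -> C) : Prop := exists j, p j != 0.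

Definition not_proportional (p q : 'I_3 -> C) : Prop :=
  exists j k : 'I_3, p j * q k != p k * q j.

(* v encodes n pairwise distinct points of P^2, i.e. a reduced
   length-n subscheme Gamma *)
Definition distinct_points (n : nat) (v : 'I_(3 * n) -> C) : Prop :=
  (forall i, nonzero3 (pt v i)) /\
  (forall i j : 'I_n, i != j -> not_proportional (pt v i) (pt v j)).

(* F lies in the degree-d part of the homogeneous ideal of
   Gamma \cup Gamma'' where Gamma = {pt v i} (reduced) and Gamma'' is the
   length-(r-1) subscheme of the line L = V(l) cut out by (l, G). *)
Definition in_ideal_union (n d : nat) (v : 'I_(3 * n) -> C)
    (l G F : {mpoly C[3]}) : Prop :=
  F \is d.-homog /\
  (forall i, F.@[pt v i] = 0) /\
  (exists a b : {mpoly C[3]}, F = a * l + b * G).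

(* G defines a length-(r-1) subscheme of L = V(l): G homogeneous of degree
   r-1 and not divisible by l; Gamma'' = V(l, G). *)
Definition subscheme_of_line (r : nat) (l G : {mpoly C[3]}) : Prop :=
  G \is (r.-1).-homog /\ ~ (exists H : {mpoly C[3]}, G = l * H).

(* Main.v *)
Set Warnings "-all".
Require Import Defs.
From mathcomp Require Import all_boot all_algebra.
From mathcomp Require Import complex.
From mathcomp Require Import Rstruct.
From mathcomp Require Import mpoly.
From mathcomp Require Import zify ring.
From Stdlib Require Import Classical.
Import GRing.Theory Num.Theory.
Local Open Scope ring_scope.

Lemma lin_solve (U E : finType) (c : E -> U -> C) : (#|E| < #|U|)%N ->
  exists x : U -> C, (exists u, x u != 0) /\ forall e, \sum_u c e u * x u = 0.
Proof.
move=> hlt.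
pose A : 'M[C]_(#|U|, #|E|) := \matrix_(i, j) c (enum_val j) (enum_val i).
have hK : kermx A != 0.
  apply/eqP => h0; have := mxrank_ker A; rewrite h0 mxrank0.
  have := rank_leq_col A; lia.
have : ~~ [forall i, row i (kermx A) == 0].
  apply: contra hK => /forallP h; apply/eqP/row_matrixP => i; rewrite row0; exact/eqP/h.
rewrite negb_forall => /existsP [i hi].
set u := row i (kermx A) in hi.
have hu : u *m A = 0 by rewrite /u -row_mul mulmx_ker row0.
exists (fun y => u 0 (enum_rank y)); split.
  have : ~~ [forall j, u 0 j == 0].
    by apply: contra hi => /forallP h; apply/eqP/rowP => j; move: (h j); rewrite !mxE => /eqP.
  rewrite negb_forall => /existsP [j hj]; exists (enum_val j); by rewrite enum_valK.
move=> e; have := congr1 (fun M : 'M[C]_(1, #|E|) => M 0 (enum_rank e)) hu; rewrite !mxE => hh; rewrite -[X in _ = X]hh.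
rewrite (reindex (@enum_val U (pred_of_simpl predT))) /=; last by apply: onW_bij; exact: enum_val_bij.
apply: eq_bigr => j _; rewrite enum_valK /A /u !mxE enum_rankK mulrC. done.
Qed.

Lemma poly_vanish (q : {poly C}) : (forall t, q.[t] = 0) -> q = 0.
Proof.
move=> h; apply/eqP; apply/negPn/negP => nz.
suff: (size [seq (i%:R : C) | i <- iota 0 (size q)] < size q)%N.
  by rewrite size_map size_iota ltnn.
apply: max_poly_roots nz _ _.
  by apply/allP => x _; rewrite /root h.
rewrite map_inj_uniq ?iota_uniq // => a b /eqP; rewrite eqr_nat => /eqP //.
Qed.

Definition o0 : 'I_3 := @Ordinal 3 0 isT.
Definition o1 : 'I_3 := @Ordinal 3 1 isT.
Definition o2 : 'I_3 := @Ordinal 3 2 isT.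

Notation Ity r := {d : 'I_r & 'I_(d.+1)}.

Definition mono {r} (x : Ity r) : 'X_{1..3} :=
  (U_(o0) *+ (r.-1 - tag x) + U_(o1) *+ (tag x - tagged x) + U_(o2) *+ tagged x)%MM.
Definition Mm {r} (x : Ity r) : {mpoly C[3]} := 'X_[mono x].
Definition aP {r} (al : Ity r -> C) : {mpoly C[3]} := \sum_x al x *: Mm x.
Definition Gm {r} (j k : 'I_3) (e : 'I_r) : {mpoly C[3]} := 'X_j ^+ (r.-1 - e) * 'X_k ^+ e.
Definition GP {r} j k (g : 'I_r -> C) : {mpoly C[3]} := \sum_e g e *: Gm j k e.

Lemma mono_inj r : injective (@mono r).
Proof.
move=> [d k] [d' k'] /mnmP h.
have h1 := h o1; have h2 := h o2.
rewrite /mono /= !mnmDE !mulmnE !mnm1E /= in h1 h2.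
have kk : (k : nat) = k' by lia.
have hk := ltn_ord k; have hk' := ltn_ord k'.
have dd : d = d' by apply: val_inj => /=; lia.
subst d'; congr existT; exact: val_inj.
Qed.

Lemma Mm_homog r (x : Ity r) : Mm x \is (r.-1).-homog.
Proof.
rewrite /Mm dhomogX; change (mdeg (mono x) == r.-1); rewrite /mono mdegE !big_ord_recr big_ord0 /= !mnmDE !mulmnE !mnm1E /=.
case: x => d k /=; have := ltn_ord d; have := ltn_ord k; move=> ? ?; apply/eqP; lia.
Qed.

Lemma aP_homog r (al : Ity r -> C) : aP al \is (r.-1).-homog.
Proof. by apply: rpred_sum => x _; apply: rpredZ; exact: Mm_homog. Qed.

Lemma aP_inj r (al : Ity r -> C) : aP al = 0 -> forall x : Ity r, al x = 0.
Proof.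
move=> h x; have := congr1 (mcoeff (mono x)) h.
rewrite mcoeff0 /aP raddf_sum (bigD1 x) //= big1 ?addr0.
  by rewrite mcoeffZ /Mm mcoeffX eqxx mulr1.
move=> y hy; rewrite mcoeffZ /Mm mcoeffX.
by rewrite (inj_eq (@mono_inj r)) (negbTE hy) mulr0.
Qed.

Lemma aP_lin r c1 c2 (al be : Ity r -> C) :
  c1 *: aP al + c2 *: aP be = aP (fun x => c1 * al x + c2 * be x).
Proof.
rewrite /aP !scaler_sumr -big_split; apply: eq_bigr => x _.
by rewrite !scalerA scalerDl.
Qed.

Lemma Gm_homog r j k (e : 'I_r) : Gm j k e \is (r.-1).-homog.
Proof.
have hX (i : 'I_3) : ('X_i : {mpoly C[3]}) \is 1.-homog.
  by rewrite dhomogX; apply/eqP; exact: mdeg1.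
have := dhomogM (dhomogMn (r.-1 - e) (hX j)) (dhomogMn e (hX k)).
have -> : (1 * (r.-1 - e) + 1 * e = r.-1)%N by have := ltn_ord e; lia.
done.
Qed.

Lemma GP_homog r j k (g : 'I_r -> C) : @GP r j k g \is (r.-1).-homog.
Proof. by apply: rpred_sum => x _; apply: rpredZ; exact: Gm_homog. Qed.

Lemma l_expand (l : {mpoly C[3]}) : l \is 1.-homog -> l = \sum_i l@_U_(i) *: 'X_i.
Proof.
move=> hl; apply/mpolyP => m; rewrite raddf_sum /=.
under eq_bigr do rewrite mcoeffZ.
case: (boolP (mdeg m == 1%N)) => [/mdeg1P [j /eqP ->] | hm].
  rewrite (bigD1 j) //= big1 ?addr0 ?mcoeffXU ?eqxx ?mulr1 //.
  by move=> i hij; rewrite mcoeffXU (negbTE hij) mulr0.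
rewrite (dhomog_nemf_coeff hl) //; symmetry; apply: big1 => i _.
rewrite mcoeffX; case: eqP => [hU|]; last by rewrite mulr0.
by move: hm; rewrite -hU mdeg1.
Qed.

Lemma l_eval (l : {mpoly C[3]}) x : l \is 1.-homog -> l.@[x] = \sum_i l@_U_(i) * x i.
Proof.
move=> hl; rewrite {1}(l_expand _ hl) rmorph_sum /=.
by apply: eq_bigr => i _; rewrite mevalZ mevalXU.
Qed.

Lemma pig3 (i j k u : 'I_3) : i != j -> i != k -> j != k -> [|| u == i, u == j | u == k].
Proof. by move: i j k u; do 4 case=> [[|[|[|//]]] ?]. Qed.

Lemma sum3 (f : 'I_3 -> C) i j k : i != j -> i != k -> j != k ->
  \sum_u f u = f i + f j + f k.
Proof.
move=> hij hik hjk; rewrite (bigD1 i) //= (bigD1 j) 1?eq_sym //= (bigD1 k) /=; last first.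
  by rewrite eq_sym hik eq_sym hjk.
rewrite big1 ?addr0 ?addrA //.
move=> u /andP [/andP [hu hu2] hu3].
by move: (@pig3 i j k u hij hik hjk); rewrite (negbTE hu) (negbTE hu2) (negbTE hu3).
Qed.

Definition Rt (lc : 'I_3 -> C) (i j k : 'I_3) (t : C) : 'I_3 -> C :=
  fun u => if u == j then 1 else if u == k then t else - (lc j + t * lc k) / lc i.

Lemma Rt_l (l : {mpoly C[3]}) i j k t : l \is 1.-homog ->
  l@_U_(i) != 0 -> i != j -> i != k -> j != k ->
  l.@[Rt (fun u => l@_U_(u)) i j k t] = 0.
Proof.
move=> hl hi hij hik hjk; rewrite l_eval // (@sum3 _ i j k hij hik hjk) /Rt.
rewrite eqxx (eq_sym k j) (negbTE hjk) eqxx (negbTE hij) (negbTE hik).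
by field.
Qed.

Lemma Rt_j lc i j k t : (Rt lc i j k t j = 1). Proof. by rewrite /Rt eqxx. Qed.
Lemma Rt_k lc i j k t : j != k -> (Rt lc i j k t k = t).
Proof. by move=> h; rewrite /Rt eq_sym (negbTE h) eqxx. Qed.

Definition pg {r} (g : 'I_r -> C) : {poly C} := \sum_(e < r) g e *: 'X^e.

Lemma GP_eval r lc i j k t (g : 'I_r -> C) : j != k ->
  (GP j k g).@[Rt lc i j k t] = (pg g).[t].
Proof.
move=> hjk; rewrite /pg horner_sum /GP rmorph_sum /=; apply: eq_bigr => e _.
rewrite mevalZ /Gm mevalM !rmorphXn /= !mevalXU Rt_j Rt_k // expr1n mul1r.
by rewrite hornerZ hornerXn.
Qed.

Lemma poly_g r (g : 'I_r -> C) : pg g = 0 -> forall e, g e = 0.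
Proof.
move=> h e; have := congr1 (fun p : {poly C} => p`_e) h.
rewrite coef0 /pg coef_sum (bigD1 e) //= big1 ?addr0.
  by rewrite coefZ coefXn eqxx mulr1.
by move=> e' he; rewrite coefZ coefXn eq_sym (inj_eq val_inj) (negbTE he) mulr0.
Qed.

Lemma aPl_eval r (al : Ity r -> C) (l : {mpoly C[3]}) x :
  (aP al * l).@[x] = \sum_y (Mm y * l).@[x] * al y.
Proof.
rewrite /aP mulr_suml rmorph_sum /=; apply: eq_bigr => y _.
by rewrite -scalerAl mevalZ mulrC.
Qed.

Lemma GPX_eval r j k (g : 'I_r -> C) (X : {mpoly C[3]}) x :
  (GP j k g * X).@[x] = \sum_e (Gm j k e * X).@[x] * g e.
Proof.
rewrite /GP mulr_suml rmorph_sum /=; apply: eq_bigr => y _.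
by rewrite -scalerAl mevalZ mulrC.
Qed.

Lemma GP0 r j k (g : 'I_r -> C) : (forall e, g e = 0) -> GP j k g = 0.
Proof. by move=> h; rewrite /GP big1 // => e _; rewrite h scale0r. Qed.

Lemma sum_succ r : ((\sum_(i < r) i.+1).*2 = r * r.+1)%N.
Proof.
elim: r => [|r IH]; first by rewrite big_ord0.
rewrite big_ord_recr /= doubleD IH; nia.
Qed.

Lemma card_Ity r : #|{: Ity r}| = ((r * r.+1) %/ 2)%N.
Proof.
rewrite card_tagged -sum_succ divn2 doubleK sumnE big_map big_enum /=.
by apply: eq_bigr => i _; rewrite card_ord.
Qed.

Theorem mainTheorem19 (r s n : nat) (hr : (2 <= r)%N) (hs : (s.*2 < r)%N)
    (hn : n = ((r * r.+1) %/ 2 + s)%N)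
    (l : {mpoly C[3]}) (hl0 : l != 0) (hl1 : l \is 1.-homog) :
  exists D : {mpoly C[3 * n]}, D != 0 /\
    forall v : 'I_(3 * n) -> C,
      D.@[v] != 0 -> distinct_points v ->
      exists G : {mpoly C[3]}, subscheme_of_line r l G /\
        exists F1 F2 : {mpoly C[3]},
          in_ideal_union r v l G F1 /\ in_ideal_union r v l G F2 /\
          (forall c1 c2 : C, c1 *: F1 + c2 *: F2 = 0 -> c1 = 0 /\ c2 = 0).
Proof.
exists 1; split; first exact: oner_neq0.
move=> v _ _.
pose lc := fun u : 'I_3 => l@_U_(u).
have [i hi] : exists i, lc i != 0.
  case: (boolP [exists i, lc i != 0]) => [/existsP //|].
  rewrite negb_exists => /forallP h; exfalso; move/eqP: hl0; apply.
  rewrite (l_expand _ hl1) big1 // => u _.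
  by move: (h u); rewrite negbK => /eqP; rewrite /lc => ->; rewrite scale0r.
have [j [k [hij hik hjk]]] : exists j k : 'I_3, [/\ i != j, i != k & j != k].
  by case: i {hi} => [[|[|[|//]]] ?]; [exists o1, o2 | exists o0, o2 | exists o0, o1].
pose R := Rt lc i j k.
have hRl t : l.@[R t] = 0 by exact: Rt_l.
have hr1 : (r.-1 + 1 = r)%N by lia.
have hX (u : 'I_3) : ('X_u : {mpoly C[3]}) \is 1.-homog.
  by rewrite dhomogX; apply/eqP; exact: mdeg1.
have homF (a b : {mpoly C[3]}) : a \is (r.-1).-homog -> b \is 1.-homog -> a * b \is r.-homog.
  by move=> ha hb; have := dhomogM ha hb; rewrite hr1.
have hI := card_Ity r.
pose W := fun al : Ity r -> C => forall p : 'I_n, (aP al * l).@[pt v p] = 0.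
have inl1 (al : Ity r -> C) G : W al -> in_ideal_union r v l G (aP al * l).
  move=> Wa; split; first exact: homF _ _ (aP_homog r al) hl1.
  by split; [exact: Wa | exists (aP al), 0; rewrite mul0r addr0].
case: (classic (exists al be, W al /\ W be /\ forall c1 c2,
   (forall x, c1 * al x + c2 * be x = 0) -> c1 = 0 /\ c2 = 0)) =>
   [[al [be [Wa [Wb hind]]]] | hnot].
  exists ('X_j ^+ r.-1); split.
    split; first by have := dhomogMn r.-1 (hX j); rewrite mul1n.
    move=> [H hH]; have := congr1 (meval (R 0)) hH.
    rewrite mevalM hRl mul0r rmorphXn /= mevalXU /R Rt_j expr1n => /eqP.
    by rewrite oner_eq0.
  exists (aP al * l), (aP be * l); split; first exact: inl1.
  split; first exact: inl1.
  move=> c1 c2; rewrite !scalerAl -mulrDl aP_lin => /eqP.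
  rewrite mulf_eq0 (negbTE hl0) orbF => /eqP /aP_inj h; exact: hind.
case: (classic (exists w, W w /\ exists x0, w x0 != 0)) =>
   [[w [Ww [x0 hx0]]] | hnot2].
  pose c : option 'I_n -> (Ity r + 'I_r) -> C := fun e u =>
    match e, u with
    | Some p, inl y => (Mm y * l).@[pt v p]
    | Some p, inr e => (Gm j k e * 'X_j).@[pt v p]
    | None, inl y => (y == x0)%:R
    | None, inr _ => 0
    end.
  have hcard : (#|{: option 'I_n}| < #|{: Ity r + 'I_r}|)%N.
    rewrite card_option card_sum hI card_ord; have := card_ord r; rewrite /= => ->; rewrite hn; move: ((r * r.+1) %/ 2)%N => N; move: hs hr; rewrite -muln2; lia.
  have [z [[u0 hu0] hz]] := @lin_solve _ _ c hcard.
  pose be := fun y => z (inl y); pose g := fun e => z (inr e).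
  have eqS p : (aP be * l + GP j k g * 'X_j).@[pt v p] = 0.
    by rewrite mevalD aPl_eval GPX_eval -[RHS](hz (Some p)) big_sumType.
  have eqN : be x0 = 0.
    rewrite -[RHS](hz None) big_sumType /= [X in _ + X]big1 ?addr0; last by move=> e _; rewrite mul0r.
    rewrite (bigD1 x0) //= big1 ?addr0 ?eqxx ?mul1r //.
    by move=> y hy; rewrite (negbTE hy) mul0r.
  have gnz : pg g != 0.
    apply/negP => /eqP /poly_g hg.
    have Wbe : W be.
      by move=> p; have := eqS p; rewrite GP0 // mul0r addr0.
    have be0 : forall y, be y = 0.
      move=> y; apply: NNPP => hy; apply: hnot; exists w, be; split=> //; split=> //.
      move=> c1 c2 h; have h0 := h x0; rewrite eqN mulr0 addr0 in h0.
      have c10 : c1 = 0 by move/eqP: h0; rewrite mulf_eq0 (negbTE hx0) orbF => /eqP.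
      split=> //; have := h y; rewrite c10 mul0r add0r => /eqP.
      by rewrite mulf_eq0 => /orP [/eqP //| /eqP hy0]; exfalso; exact: hy.
    by move: hu0; case: u0 => [y|e]; [rewrite -/(be y) be0 eqxx | rewrite -/(g e) hg eqxx].
  exists (GP j k g); split.
    split; first exact: GP_homog.
    move=> [H hH]; apply/negP: gnz; apply/negPn/eqP/poly_vanish => t.
    by rewrite -(@GP_eval r lc i j k t g hjk) hH mevalM hRl mul0r.
  exists (aP w * l), (aP be * l + GP j k g * 'X_j); split; first exact: inl1.
  split.
    split; first by apply: rpredD; [exact: homF _ _ (aP_homog r be) hl1 | exact: homF _ _ (GP_homog _ _ _ g) (hX j)].
    by split; [exact: eqS | exists (aP be), 'X_j; rewrite [_ * 'X_j]mulrC].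
  move=> c1 c2 h0.
  have hc2 : c2 = 0.
    apply/eqP; apply: contraT => nz; exfalso; apply/negP: gnz; apply/negPn/eqP/poly_vanish => t.
    have := congr1 (meval (R t)) h0.
    rewrite rmorph0 mevalD !mevalZ mevalD !mevalM hRl !mulr0 !add0r mevalXU /R Rt_j mulr1.
    by rewrite GP_eval // => /eqP; rewrite mulf_eq0 (negbTE nz) => /eqP.
  subst c2; split=> //; move: h0; rewrite scale0r addr0 => /eqP.
  rewrite scaler_eq0 mulf_eq0 (negbTE hl0) orbF => /orP [/eqP //| /eqP hw].
  by move: hx0; rewrite (aP_inj _ _ hw x0) eqxx.
have W0 (w : Ity r -> C) : W w -> forall x, w x = 0.
  move=> Ww x; apply: NNPP => hx; apply: hnot2; exists w; split=> //; exists x.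
  by apply/eqP.
pose c : ('I_n + 'I_n) -> ((Ity r + Ity r) + 'I_r) -> C := fun e u =>
  match e, u with
  | inl p, inl (inl y) => (Mm y * l).@[pt v p]
  | inl p, inl (inr y) => 0
  | inl p, inr e => (Gm j k e * 'X_j).@[pt v p]
  | inr p, inl (inl y) => 0
  | inr p, inl (inr y) => (Mm y * l).@[pt v p]
  | inr p, inr e => (Gm j k e * 'X_k).@[pt v p]
  end.
have hcard : (#|{: 'I_n + 'I_n}| < #|{: (Ity r + Ity r) + 'I_r}|)%N.
  rewrite !card_sum hI card_ord; have := card_ord r; rewrite /= => ->; rewrite hn.
  move: ((r * r.+1) %/ 2)%N => N; move: hs hr; rewrite -muln2; lia.
have [z [[u0 hu0] hz]] := @lin_solve _ _ c hcard.
pose a1 := fun y => z (inl (inl y)); pose a2 := fun y => z (inl (inr y)).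
pose g := fun e => z (inr e).
have eq1 p : (aP a1 * l + GP j k g * 'X_j).@[pt v p] = 0.
  rewrite mevalD aPl_eval GPX_eval -[RHS](hz (inl p)) !big_sumType /=.
  by rewrite [X in _ + X + _]big1 ?addr0 // => y _; rewrite mul0r.
have eq2 p : (aP a2 * l + GP j k g * 'X_k).@[pt v p] = 0.
  rewrite mevalD aPl_eval GPX_eval -[RHS](hz (inr p)) !big_sumType /=.
  by rewrite [X in X + _ + _]big1 ?add0r // => y _; rewrite mul0r.
have gnz : pg g != 0.
  apply/negP => /eqP /poly_g hg.
  have h1 : W a1 by move=> p; have := eq1 p; rewrite GP0 // mul0r addr0.
  have h2 : W a2 by move=> p; have := eq2 p; rewrite GP0 // mul0r addr0.
  move: hu0; case: u0 => [[y|y]|e].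
  - by rewrite -/(a1 y) (W0 _ h1) eqxx.
  - by rewrite -/(a2 y) (W0 _ h2) eqxx.
  - by rewrite -/(g e) hg eqxx.
exists (GP j k g); split.
  split; first exact: GP_homog.
  move=> [H hH]; apply/negP: gnz; apply/negPn/eqP/poly_vanish => t.
  by rewrite -(@GP_eval r lc i j k t g hjk) hH mevalM hRl mul0r.
exists (aP a1 * l + GP j k g * 'X_j), (aP a2 * l + GP j k g * 'X_k); split.
  split; first by apply: rpredD; [exact: homF _ _ (aP_homog r a1) hl1 | exact: homF _ _ (GP_homog _ _ _ g) (hX j)].
  by split; [exact: eq1 | exists (aP a1), 'X_j; rewrite [_ * 'X_j]mulrC].
split.
  split; first by apply: rpredD; [exact: homF _ _ (aP_homog r a2) hl1 | exact: homF _ _ (GP_homog _ _ _ g) (hX k)].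
  by split; [exact: eq2 | exists (aP a2), 'X_k; rewrite [_ * 'X_k]mulrC].
move=> c1 c2 h0.
have hq : pg g * (c1%:P + c2 *: 'X) = 0.
  apply: poly_vanish => t; have := congr1 (meval (R t)) h0.
  rewrite rmorph0 !mevalD !mevalZ !mevalD !mevalM hRl !mulr0 !add0r !mevalXU /R Rt_j Rt_k //.
  rewrite !GP_eval // hornerM hornerD hornerC hornerZ hornerX => <-; ring.
move/eqP: hq; rewrite mulf_eq0 (negbTE gnz) /= => /eqP hq.
have := congr1 (fun p : {poly C} => p`_0) hq; have := congr1 (fun p : {poly C} => p`_1) hq.
rewrite /= !coefD !coefC !coefZ !coefX /= mulr0 mulr1 addr0 add0r.
by move=> -> ->.
Qed.
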